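(* Let $G$ be a group and let $H$ be a subgroup of $G$ that is closed in the profinite topology of $G$. Then $\mu(H)=\frac{1}{[G:H]}$ (interpreted as $0$ when $[G:H]=\infty$).
   Context: The profinite topology on a group $G$ has as a basis the cosets of finite index subgroups of $G$; equivalently a subgroup is closed iff it is an intersection of finite index subgroups. The profinite measure of a subset $S\subseteq G$ is $\mu(S)=\inf_{\varphi}\frac{|\varphi(S)|}{|\varphi(G)|}$, where $\varphi$ ranges over all epimorphisms from $G$ onto finite groups. *)

(* Defs.v *)
From mathcomp Require Import all_boot all_order all_algebra all_fingroup.
From mathcomp Require Import boolp reals.
Set Implicit Arguments. Unset Strict Implicit. Unset Printing Implicit Defensive.
Import GRing.Theory Num.Theory.

Record agroup := AGroup {
  carrier :> Type;
  gmul : carrier -> carrier -> carrier;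
  gone : carrier;
  ginv : carrier -> carrier;
  gmulA : forall x y z, gmul x (gmul y z) = gmul (gmul x y) z;
  gmul1 : forall x, gmul gone x = x;
  gmulV : forall x, gmul (ginv x) x = gone
}.

Definition is_subgroup (G : agroup) (H : G -> Prop) : Prop :=
  H (gone G) /\ (forall x y, H x -> H y -> H (gmul x y)) /\
  (forall x, H x -> H (ginv x)).

(* [G : H] = n : the left cosets x H are indexed by exactly n representatives *)
Definition has_index (G : agroup) (H : G -> Prop) (n : nat) : Prop :=
  exists f : 'I_n -> G, forall x : G, exists! i : 'I_n, H (gmul (ginv (f i)) x).

Definition finite_index_subgroup (G : agroup) (K : G -> Prop) : Prop :=
  is_subgroup K /\ exists n, has_index K n.

(* H closed in the profinite topology: H is the intersection of the
   finite index subgroups containing it. *)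
Definition profinitely_closed (G : agroup) (H : G -> Prop) : Prop :=
  forall x : G,
    (forall K : G -> Prop, finite_index_subgroup K ->
       (forall y, H y -> K y) -> K x) -> H x.

Definition is_epi (G : agroup) (gT : finGroupType) (phi : G -> gT) : Prop :=
  (forall x y, phi (gmul x y) = (phi x * phi y)%g) /\
  (forall z : gT, exists x, phi x = z).

Definition img (G : agroup) (gT : finGroupType) (phi : G -> gT) (S : G -> Prop)
  : {set gT} := finset (fun z => `[< exists x, S x /\ phi x = z >]).

Definition pmeasure (R : realType) (G : agroup) (S : G -> Prop) : R :=
  inf (fun r : R => exists (gT : finGroupType) (phi : G -> gT),
         is_epi phi /\ r = (#|img phi S|%:R / #|[set: gT]|%:R)%R).

(* Main.v *)
Require Import Defs.
From mathcomp Require Import all_boot all_order all_algebra all_fingroup.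
From mathcomp Require Import boolp reals.
From mathcomp Require Import ring.
Set Implicit Arguments. Unset Strict Implicit. Unset Printing Implicit Defensive.
Import Order.TTheory GRing.Theory Num.Theory.

Lemma gmulV' (G : agroup) (x : G) : gmul x (ginv x) = gone G.
Proof.
have yy : gmul (gmul x (ginv x)) (gmul x (ginv x)) = gmul x (ginv x).
  by rewrite -gmulA [gmul (ginv x) _]gmulA gmulV gmul1.
by rewrite -[LHS]gmul1 -(gmulV (gmul x (ginv x))) -gmulA yy.
Qed.

Lemma gmul1' (G : agroup) (x : G) : gmul x (gone G) = x.
Proof. by rewrite -(gmulV x) gmulA gmulV' gmul1. Qed.

Lemma gmulKg (G : agroup) (a x : G) : gmul a (gmul (ginv a) x) = x.
Proof. by rewrite gmulA gmulV' gmul1. Qed.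

Lemma gmulVKg (G : agroup) (a x : G) : gmul (ginv a) (gmul a x) = x.
Proof. by rewrite gmulA gmulV gmul1. Qed.

Lemma gmulI (G : agroup) (a x y : G) : gmul a x = gmul a y -> x = y.
Proof. by move=> e; rewrite -(gmulVKg a x) e gmulVKg. Qed.

Lemma ginvM (G : agroup) (a b : G) : ginv (gmul a b) = gmul (ginv b) (ginv a).
Proof.
apply: (@gmulI _ (gmul a b)); rewrite gmulV' -gmulA [gmul b _]gmulA gmulV' gmul1.
by rewrite gmulV'.
Qed.

Lemma ginvK (G : agroup) (a : G) : ginv (ginv a) = a.
Proof. by apply: (@gmulI _ (ginv a)); rewrite gmulV' gmulV. Qed.

Lemma ginv1 (G : agroup) : ginv (gone G) = gone G.
Proof. by rewrite -[LHS]gmul1' gmulV. Qed.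

Definition coset_idx (G : agroup) (K : G -> Prop) n (f : 'I_n -> G) (idx : G -> 'I_n) :=
  (forall x, K (gmul (ginv (f (idx x))) x)) /\
  (forall x i, K (gmul (ginv (f i)) x) -> i = idx x).

Lemma has_index_idx (G : agroup) (K : G -> Prop) n :
  has_index K n -> exists f idx, @coset_idx G K n f idx.
Proof.
move=> [f hf]; exists f.
have ex x : exists i, K (gmul (ginv (f i)) x) /\ forall j, K (gmul (ginv (f j)) x) -> i = j.
  by have [i [Hi U]] := hf x; exists i.
exists (fun x => proj1_sig (cid (ex x))); split=> [x|x i Hi].
  by case: (cid (ex x)) => i [].
by case: (cid (ex x)) => j [_ U] /=; apply/esym/U.
Qed.

Lemma sg_inv (G : agroup) (K : G -> Prop) x : is_subgroup K -> K x -> K (ginv x).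
Proof. by case=> _ [_ h]; apply: h. Qed.
Lemma sg_mul (G : agroup) (K : G -> Prop) x y : is_subgroup K -> K x -> K y -> K (gmul x y).
Proof. by case=> _ [h _]; apply: h. Qed.
Lemma sg_one (G : agroup) (K : G -> Prop) : is_subgroup K -> K (gone G).
Proof. by case. Qed.

Lemma idx_eq (G : agroup) (K : G -> Prop) n f idx x y :
  is_subgroup K -> @coset_idx G K n f idx ->
  idx y = idx x <-> K (gmul (ginv y) x).
Proof.
move=> sK [P U]; split.
  move=> e; have := sg_mul sK (sg_inv sK (P y)) (P x).
  by rewrite e ginvM ginvK -gmulA gmulKg.
move=> Kyx; apply: U.
have := sg_mul sK (P y) Kyx; by rewrite -gmulA gmulKg.
Qed.

Lemma idx_f (G : agroup) (K : G -> Prop) n f idx i :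
  is_subgroup K -> @coset_idx G K n f idx -> idx (f i) = i.
Proof. by move=> sK [P U]; apply/esym/U; rewrite gmulV; apply: sg_one. Qed.

Lemma imgP (G : agroup) (gT : finGroupType) (phi : G -> gT) S z :
  reflect (exists x, S x /\ phi x = z) (z \in img phi S).
Proof. by rewrite inE; apply: asboolP. Qed.

Lemma epi1 (G : agroup) (gT : finGroupType) (phi : G -> gT) :
  is_epi phi -> phi (gone G) = 1%g.
Proof.
move=> [hM _]; apply: (@mulgI _ (phi (gone G))); rewrite -hM gmul1 mulg1 //.
Qed.

Lemma epiV (G : agroup) (gT : finGroupType) (phi : G -> gT) x :
  is_epi phi -> phi (ginv x) = (phi x)^-1%g.
Proof.
move=> e; apply: (@mulgI _ (phi x)); rewrite mulgV -(proj1 e) gmulV' epi1 //.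
Qed.

Lemma count_main (G : agroup) (K : G -> Prop) n f idx (gT : finGroupType) (phi : G -> gT) :
  is_subgroup K -> @coset_idx G K n f idx -> is_epi phi ->
  [set: gT] = [set (phi (f p.1) * p.2)%g | p in setX [set: 'I_n] (img phi K)].
Proof.
move=> sK [P U] e; apply/setP=> z; rewrite inE; apply/esym/imsetP.
have [x <-] := (proj2 e) z.
exists (idx x, phi (gmul (ginv (f (idx x))) x)).
  rewrite !inE /=; apply/asboolP; by exists (gmul (ginv (f (idx x))) x).
by rewrite /= -(proj1 e) gmulKg.
Qed.

Lemma count_le (G : agroup) (K : G -> Prop) n f idx (gT : finGroupType) (phi : G -> gT) :
  is_subgroup K -> @coset_idx G K n f idx -> is_epi phi ->
  #|[set: gT]| <= n * #|img phi K|.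
Proof.
move=> sK ci e; rewrite (count_main sK ci e).
by apply: leq_trans (leq_imset_card _ _) _; rewrite cardsX cardsT card_ord.
Qed.

Lemma count_eq (G : agroup) (K : G -> Prop) n f idx (gT : finGroupType) (phi : G -> gT) :
  is_subgroup K -> @coset_idx G K n f idx -> is_epi phi ->
  (forall x k, K k -> phi x = phi k -> K x) ->
  #|[set: gT]| = n * #|img phi K|.
Proof.
move=> sK ci e pre; rewrite (count_main sK ci e).
rewrite card_in_imset ?cardsX ?cardsT ?card_ord //.
move=> [i y] [j y']; rewrite !inE /= => /asboolP [k [Kk <-]] /asboolP [k' [Kk' <-]] /= E.
have Kij : K (gmul (ginv (f j)) (f i)).
  have H1 : phi (gmul (gmul (ginv (f j)) (f i)) (gmul k (ginv k'))) = phi (gone G).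
    rewrite !(proj1 e) !epiV // epi1 // mulgA -(mulgA _ (phi (f i))) E.
    by rewrite mulKg mulgV.
  have := pre _ _ (sg_one sK) H1 => Kp.
  have := sg_mul sK Kp (sg_mul sK Kk' (sg_inv sK Kk)).
  by rewrite -gmulA [gmul (gmul k _) _]gmulA -[gmul (gmul k _) k']gmulA gmulV gmul1' gmulV' gmul1'.
have ij : j = i.
  have := (proj2 ci) _ _ Kij; by rewrite (idx_f _ sK ci).
subst j; congr (_, _); by move/mulgI: E.
Qed.

Lemma sigma_inj (G : agroup) (K : G -> Prop) n f idx (g : G) :
  is_subgroup K -> @coset_idx G K n f idx ->
  injective (fun i => idx (gmul (ginv g) (f i))).
Proof.
move=> sK ci i j /(idx_eq _ _ sK ci).
rewrite ginvM ginvK -gmulA gmulKg => /(idx_eq _ _ sK ci).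
by rewrite !(idx_f _ sK ci).
Qed.

Lemma epi_exists (G : agroup) (K : G -> Prop) n f idx :
  is_subgroup K -> @coset_idx G K n f idx ->
  exists (gT : finGroupType) (phi : G -> gT), is_epi phi /\
    (forall x k, K k -> phi x = phi k -> K x).
Proof.
move=> sK ci.
pose rho (g : G) : {perm 'I_n} := perm (@sigma_inj G K n f idx g sK ci).
have rhoM g h : rho (gmul g h) = (rho g * rho h)%g.
  apply/permP => i; rewrite permM !permE.
  apply/(idx_eq _ _ sK ci).
  rewrite !ginvM !ginvK -!gmulA gmulKg.
  have := sg_inv sK ((proj1 ci) (gmul (ginv g) (f i))).
  by rewrite !ginvM !ginvK gmulA.
pose A : {set {perm 'I_n}} := finset (fun s => `[< exists g, rho g = s >]).
have gA : group_set A.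
  apply/group_setP; split.
    rewrite inE; apply/asboolP; exists (gone G).
    apply: (@mulgI _ (rho (gone G))); by rewrite -rhoM gmul1 mulg1.
  move=> s t; rewrite !inE => /asboolP [g <-] /asboolP [h <-].
  by apply/asboolP; exists (gmul g h).
pose AG := Group gA.
have rhoA g : rho g \in AG by rewrite inE; apply/asboolP; exists g.
exists [subg AG]%type, (fun g => subg AG (rho g)); split; first split.
- by move=> x y; rewrite rhoM subgM.
- move=> z; have := subgP z; rewrite inE => /asboolP [g eg].
  by exists g; rewrite eg sgvalK.
move=> x k Kk /(congr1 val); rewrite !subgK // => /(congr1 (fun s : {perm _} => s (idx (gone G)))).
rewrite !permE => /(idx_eq _ _ sK ci).
set i0 := idx (gone G).
have Kf : K (f i0).
  have := (proj1 ci) (gone G); rewrite gmul1' => /(sg_inv sK); by rewrite ginvK.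
rewrite ginvM ginvK => Kc.
have := sg_mul sK (sg_mul sK Kf Kc) (sg_inv sK Kf).
rewrite -!gmulA gmulKg gmulV' gmul1' => Kxk.
have := sg_mul sK Kxk Kk; by rewrite -gmulA gmulV gmul1'.
Qed.

Lemma index_of_map (G : agroup) (K : G -> Prop) (T : finType) (p : G -> T) :
  (forall x y, p x = p y <-> K (gmul (ginv x) y)) -> exists c, has_index K c.
Proof.
move=> hp; pose P : {set T} := finset (fun z => `[< exists x, p x = z >]).
have exP (i : 'I_#|P|) : exists x, p x = enum_val i.
  by have := enum_valP i; rewrite inE => /asboolP.
exists #|P|, (fun i => proj1_sig (cid (exP i))) => x.
have Px : p x \in P by rewrite inE; apply/asboolP; exists x.
exists (enum_rank_in Px (p x)); split.
  by case: (cid _) => y /= ey; apply/hp; rewrite ey enum_rankK_in.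
move=> j; case: (cid _) => y /= ey /hp e; rewrite ey in e.
by rewrite -{1}(enum_valK_in Px j) e.
Qed.

Lemma index_cap (G : agroup) (K1 K2 : G -> Prop) a b :
  is_subgroup K1 -> is_subgroup K2 -> has_index K1 a -> has_index K2 b ->
  exists c, has_index (fun x => K1 x /\ K2 x) c.
Proof.
move=> s1 s2 /has_index_idx [f1 [i1 c1]] /has_index_idx [f2 [i2 c2]].
apply: (@index_of_map _ _ _ (fun x => (i1 x, i2 x))) => x y; split.
  by case=> /(idx_eq _ _ s1 c1) ? /(idx_eq _ _ s2 c2).
by case=> /(idx_eq _ _ s1 c1) -> /(idx_eq _ _ s2 c2) ->.
Qed.

Lemma index_sub (G : agroup) (K K' : G -> Prop) a c :
  is_subgroup K -> is_subgroup K' -> (forall x, K' x -> K x) ->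
  has_index K a -> has_index K' c -> c <= a -> forall x, K x -> K' x.
Proof.
move=> sK sK' sub /has_index_idx [f [idx ci]] /has_index_idx [f' [idx' ci']] ca x Kx.
pose m (i : 'I_c) := idx (f' i).
have midx y : m (idx' y) = idx y.
  by apply/(idx_eq _ _ sK ci); apply: sub; exact: (proj1 ci').
have surj : [set: 'I_a] \subset [set m i | i in [set: 'I_c]].
  apply/subsetP => j _; apply/imsetP; exists (idx' (f j)); first by rewrite in_setT.
  by rewrite midx (idx_f _ sK ci).
have cardim : #|[set m i | i in [set: 'I_c]]| = c.
  apply/eqP; rewrite eqn_leq; apply/andP; split.
    by apply: leq_trans (leq_imset_card _ _) _; rewrite cardsT card_ord.
  by apply: leq_trans ca _; have := subset_leq_card surj; rewrite cardsT card_ord.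
have inj : injective m.
  move=> i j; apply: (imset_injP _ _ _) => //.
  by rewrite cardim cardsT card_ord.
have := inj (idx' x) (idx' (gone G)); rewrite !midx.
have -> : idx x = idx (gone G).
  by apply/(idx_eq _ _ sK ci); rewrite gmul1'; apply: sg_inv.
move=> /(_ erefl) /(idx_eq _ _ sK' ci'); rewrite gmul1' => /(sg_inv sK').
by rewrite ginvK.
Qed.

Lemma index_true (G : agroup) : has_index (fun _ : G => True) 1.
Proof.
exists (fun _ => gone G) => x; exists ord0; split=> // i _; exact/esym/ord1.
Qed.

Lemma unbounded (G : agroup) (H : G -> Prop) :
  is_subgroup H -> profinitely_closed H -> (forall n : nat, ~ has_index H n) ->
  forall m, exists L c, is_subgroup L /\ (forall x, H x -> L x) /\ has_index L c /\ m <= c.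
Proof.
move=> sH cH nH m.
case: (pselect (exists L c, is_subgroup L /\ (forall x, H x -> L x) /\ has_index L c /\ m <= c)) => // nex.
pose P k := `[< exists L, is_subgroup L /\ (forall x, H x -> L x) /\ has_index L k >].
have exP : exists k, P k.
  exists 1; apply/asboolP; exists (fun _ => True); split; last split => //.
    by split=> //.
  exact: index_true.
have ubP i : P i -> i <= m.
  move/asboolP=> [L [sL [HL iL]]]; rewrite leqNgt; apply/negP => mi.
  apply: nex; exists L, i; do 3 split => //; exact: ltnW.
case: (ex_maxnP exP ubP) => a /asboolP [K [sK [HK iK]]] maxa.
have KH x : K x -> H x.
  move=> Kx; apply: cH => K' [sK' [b iK']] HK'.
  have sKK' : is_subgroup (fun y => K y /\ K' y).
    case: sK => [o [mu iv]]; case: sK' => [o' [mu' iv']]; split; first by [].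
    split=> [y z [? ?] [? ?]|y [? ?]]; split; auto.
  have [c ic] := index_cap sK sK' iK iK'.
  have ca : c <= a.
    apply: maxa; apply/asboolP; exists (fun y => K y /\ K' y); split => //; split => //.
    by move=> y Hy; split; auto.
  by have [] := index_sub sK sKK' (fun y => @proj1 _ _) iK ic ca Kx.
exfalso; apply: (nH a).
have -> : H = K by apply: funext => x; apply: propext; split; auto.
exact: iK.
Qed.

Lemma cardT_gt0 (gT : finGroupType) : (0 < #|[set: gT]|)%N.
Proof. by apply/card_gt0P; exists 1%g; rewrite in_setT. Qed.

Theorem proposition2p1 (R : realType) (G : agroup) (H : G -> Prop) :
  is_subgroup H -> profinitely_closed H ->
  (forall n : nat, has_index H n -> pmeasure R H = (1 / n%:R)%R) /\
  ((forall n : nat, ~ has_index H n) -> pmeasure R H = 0%R).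
Proof.
move=> sH cH.
pose E := (fun r : R => exists (gT : finGroupType) (phi : G -> gT),
         is_epi phi /\ r = (#|img phi H|%:R / #|[set: gT]|%:R)%R).
have E0 r : E r -> (0 <= r)%R.
  by move=> [gT [phi [_ ->]]]; apply: divr_ge0; apply: ler0n.
have lbE : classical_sets.has_lbound E by exists 0%R => r /E0.
have neE : classical_sets.nonempty E.
  have [f [idx ci]] := has_index_idx (index_true G).
  have sT : is_subgroup (fun _ : G => True) by split.
  have [gT [phi [e _]]] := epi_exists sT ci.
  by exists (#|img phi H|%:R / #|[set: gT]|%:R)%R, gT, phi.
split.
  move=> n /has_index_idx [f [idx ci]].
  rewrite /pmeasure -/E; apply/le_anti/andP; split.
    have [gT [phi [e pre]]] := epi_exists sH ci.
    have ceq := count_eq sH ci e pre.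
    apply: (ge_inf lbE); exists gT, phi; split => //.
    have bp := cardT_gt0 gT.
    have np : (0 < n)%N by move: bp; rewrite ceq muln_gt0 => /andP [].
    have ap : (0 < #|img phi H|)%N by move: bp; rewrite ceq muln_gt0 => /andP [].
    rewrite ceq natrM; field.
    by apply/andP; split; rewrite pnatr_eq0 -lt0n.
  apply: lb_le_inf => // r [gT [phi [e ->]]].
  have bp := cardT_gt0 gT.
  have cle := count_le sH ci e.
  have np : (0 < n)%N by move: (leq_trans bp cle); rewrite muln_gt0 => /andP [].
  rewrite ler_pdivlMr ?ltr0n // mul1r mulrC ler_pdivrMr ?ltr0n //.
  by rewrite -natrM ler_nat mulnC.
move=> nH; rewrite /pmeasure -/E; apply/le_anti/andP; split; last first.
  by apply: lb_le_inf => // r /E0.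
rewrite leNgt; apply/negP => ip.
have [L [c [sL [HL [iL mc]]]]] := unbounded sH cH nH (Num.Def.archi_bound (inf E)^-1).
have [f [idx ci]] := has_index_idx iL.
have [gT [phi [e pre]]] := epi_exists sL ci.
have ceq := count_eq sL ci e pre.
have sub : img phi H \subset img phi L.
  apply/subsetP => z; rewrite !inE => /asboolP [x [Hx <-]]; apply/asboolP; exists x; auto.
have le1 := subset_leq_card sub.
have bp := cardT_gt0 gT.
have cp : (0 < c)%N by move: bp; rewrite ceq muln_gt0 => /andP [].
have lp : (0 < #|img phi L|)%N by move: bp; rewrite ceq muln_gt0 => /andP [].
have hinf : (inf E <= #|img phi H|%:R / #|[set: gT]|%:R)%R.
  by apply: (ge_inf lbE); exists gT, phi.
have hc : (#|img phi H|%:R / #|[set: gT]|%:R * c%:R <= 1 :> R)%R.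
  rewrite ceq natrM.
  have -> : (#|img phi H|%:R / (c%:R * #|img phi L|%:R) * c%:R
             = #|img phi H|%:R / #|img phi L|%:R :> R)%R.
    by field; apply/andP; split; rewrite pnatr_eq0 -lt0n.
  by rewrite ler_pdivrMr ?ltr0n // mul1r ler_nat.
have ip' : (0 < (inf E)^-1)%R by rewrite invr_gt0.
have ab := archi_boundP (ltW ip').
have : (1 < inf E * c%:R)%R.
  rewrite -(ler_nat R) in mc.
  have h : ((inf E)^-1 < c%:R)%R by apply: lt_le_trans ab mc.
  rewrite -(ltr_pM2l (x := inf E) ip) in h.
  by rewrite mulfV ?gt_eqF in h.
have : (inf E * c%:R <= 1)%R.
  apply: le_trans hc; apply: ler_wpM2r; [exact: ler0n | exact: hinf].
by move=> a b; have := lt_le_trans b a; rewrite ltxx.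
Qed.
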